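(* Let $A$ be a partially symmetric 0-dialgebra. On $A\oplus A$ define $(a,b)\dashv(c,d)=(a\dashv c-d\vdash b^\ast,\; a^\ast\dashv d+c\vdash b)$, $(a,b)\vdash(c,d)=(a\vdash c-d\dashv b^\ast,\; a^\ast\vdash d+c\dashv b)$ and $(a,b)^\ast=(a^\ast,-b)$. Then $A\oplus A$ with these operations is a partially symmetric 0-dialgebra.
   Context: A 0-dialgebra with involution is a vector space with bilinear operations $\dashv,\vdash$ satisfying $a\dashv(b\dashv c)=a\dashv(b\vdash c)$ and $(a\dashv b)\vdash c=(a\vdash b)\vdash c$, together with a linear map $\ast$ with $(a^\ast)^\ast=a$, $(a\dashv b)^\ast=b^\ast\vdash a^\ast$, $(a\vdash b)^\ast=b^\ast\dashv a^\ast$. Write $\mathrm{sym}(x)=x+x^\ast$ and $\{x,y\}=x\dashv y-y\vdash x$. Such a structure is partially symmetric if $\{\mathrm{sym}(x),y\}=0$ and $\{x,\mathrm{sym}(y)\}=0$ for all $x,y$. *)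

(* Defs.v *)
From mathcomp Require Import all_boot all_algebra.
Set Implicit Arguments. Unset Strict Implicit. Unset Printing Implicit Defensive.
Import GRing.Theory.
Local Open Scope ring_scope.

Definition bilinear_op (K : fieldType) (V : lmodType K) (op : V -> V -> V) : Prop :=
  (forall (k : K) (x y z : V), op (k *: x + y) z = k *: op x z + op y z) /\
  (forall (k : K) (x y z : V), op x (k *: y + z) = k *: op x y + op x z).

Definition linear_map (K : fieldType) (V : lmodType K) (f : V -> V) : Prop :=
  forall (k : K) (x y : V), f (k *: x + y) = k *: f x + f y.

(* 0-dialgebra with involution: (V, dashv = l, vdash = r, ast = s). *)
Definition zero_dialg_inv (K : fieldType) (V : lmodType K)
    (l r : V -> V -> V) (s : V -> V) : Prop :=
  [/\ bilinear_op l, bilinear_op r & linear_map s] /\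
  [/\ (forall a b c : V, l a (l b c) = l a (r b c)),
      (forall a b c : V, r (l a b) c = r (r a b) c) &
      (forall a : V, s (s a) = a)] /\
  (forall a b : V, s (l a b) = r (s b) (s a)) /\
  (forall a b : V, s (r a b) = l (s b) (s a)).

Definition symz (K : fieldType) (V : lmodType K) (s : V -> V) (x : V) : V := x + s x.

Definition dbrack (K : fieldType) (V : lmodType K) (l r : V -> V -> V) (x y : V) : V :=
  l x y - r y x.

Definition partially_symmetric (K : fieldType) (V : lmodType K)
    (l r : V -> V -> V) (s : V -> V) : Prop :=
  [/\ zero_dialg_inv l r s,
      (forall x y : V, dbrack l r (symz s x) y = 0) &
      (forall x y : V, dbrack l r x (symz s y) = 0)].

Definition dbl_l (K : fieldType) (V : lmodType K) (l r : V -> V -> V) (s : V -> V)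
    (p q : V * V) : V * V :=
  (l p.1 q.1 - r q.2 (s p.2), l (s p.1) q.2 + r q.1 p.2).

Definition dbl_r (K : fieldType) (V : lmodType K) (l r : V -> V -> V) (s : V -> V)
    (p q : V * V) : V * V :=
  (r p.1 q.1 - l q.2 (s p.2), r (s p.1) q.2 + l q.1 p.2).

Definition dbl_s (K : fieldType) (V : lmodType K) (s : V -> V) (p : V * V) : V * V :=
  (s p.1, - p.2).

(* Main.v *)
Require Import Defs.
From mathcomp Require Import all_boot all_algebra.
Import GRing.Theory.
Local Open Scope ring_scope.
Set Implicit Arguments. Unset Strict Implicit.

Section Aux.
Variables (K : fieldType) (V : lmodType K).
Implicit Types (f : V -> V -> V) (g : V -> V).

Lemma opDl f : bilinear_op f -> forall x y z, f (x + y) z = f x z + f y z.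
Proof. by case=> H _ x y z; rewrite -[x]scale1r H !scale1r. Qed.
Lemma opDr f : bilinear_op f -> forall x y z, f z (x + y) = f z x + f z y.
Proof. by case=> _ H x y z; rewrite -[x]scale1r H !scale1r. Qed.
Lemma op0l f : bilinear_op f -> forall z, f 0 z = 0.
Proof. move=> H z; apply: (addrI (f 0 z)); by rewrite -opDl // !addr0. Qed.
Lemma op0r f : bilinear_op f -> forall z, f z 0 = 0.
Proof. move=> H z; apply: (addrI (f z 0)); by rewrite -opDr // !addr0. Qed.
Lemma opZl f : bilinear_op f -> forall k x z, f (k *: x) z = k *: f x z.
Proof. move=> H k x z; case: (H) => H1 _.
by rewrite -[k *: x]addr0 H1 op0l // addr0. Qed.
Lemma opZr f : bilinear_op f -> forall k x z, f z (k *: x) = k *: f z x.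
Proof. move=> H k x z; case: (H) => _ H1.
by rewrite -[k *: x]addr0 H1 op0r // addr0. Qed.
Lemma opNl f : bilinear_op f -> forall x z, f (- x) z = - f x z.
Proof. by move=> H x z; rewrite -scaleN1r opZl // scaleN1r. Qed.
Lemma opNr f : bilinear_op f -> forall x z, f z (- x) = - f z x.
Proof. by move=> H x z; rewrite -scaleN1r opZr // scaleN1r. Qed.
Lemma opBl f : bilinear_op f -> forall x y z, f (x - y) z = f x z - f y z.
Proof. by move=> H x y z; rewrite opDl // opNl. Qed.
Lemma opBr f : bilinear_op f -> forall x y z, f z (x - y) = f z x - f z y.
Proof. by move=> H x y z; rewrite opDr // opNr. Qed.

Lemma linD g : linear_map g -> forall x y, g (x + y) = g x + g y.
Proof. by move=> H x y; rewrite -[x]scale1r H !scale1r. Qed.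
Lemma lin0 g : linear_map g -> g 0 = 0.
Proof. move=> H; apply: (addrI (g 0)); by rewrite -linD // !addr0. Qed.
Lemma linZ g : linear_map g -> forall k x, g (k *: x) = k *: g x.
Proof. by move=> H k x; rewrite -[k *: x]addr0 H lin0 // addr0. Qed.
Lemma linN g : linear_map g -> forall x, g (- x) = - g x.
Proof. by move=> H x; rewrite -scaleN1r linZ // scaleN1r. Qed.
Lemma linB g : linear_map g -> forall x y, g (x - y) = g x - g y.
Proof. by move=> H x y; rewrite linD // linN. Qed.

Lemma swapBD (a b c d : V) : (a + b) - (c + d) = (a - c) + (b - d).
Proof. by rewrite opprD addrACA. Qed.
Lemma pairZD k (a b c d : V) : k *: ((a, b) : V * V) + (c, d) = (k *: a + c, k *: b + d).
Proof. by []. Qed.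
Lemma pairD (a b c d : V) : ((a, b) : V * V) + (c, d) = (a + c, b + d).
Proof. by []. Qed.
Lemma pairN (a b : V) : - ((a, b) : V * V) = (- a, - b).
Proof. by []. Qed.
Lemma pair0 : (0 : V * V) = (0, 0).
Proof. by []. Qed.
End Aux.

Ltac simp Bl Br Ls := rewrite ?(opDl Bl, opDr Bl, opDl Br, opDr Br, opZl Bl, opZr Bl, opZl Br, opZr Br,
   opNl Bl, opNr Bl, opNl Br, opNr Br, op0l Bl, op0r Bl, op0l Br, op0r Br,
   linD Ls, linZ Ls, linN Ls, lin0 Ls) /=.
Ltac zc := rewrite ?scalerDr ?scalerBr ?scalerN ?opprD; first [done | by rewrite swapBD | by rewrite addrACA | idtac].

Section Main.
Variables (K : fieldType) (V : lmodType K) (l r : V -> V -> V) (s : V -> V).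
Hypotheses (Bl : bilinear_op l) (Br : bilinear_op r) (Ls : linear_map s).
Hypotheses (A1 : forall a b c : V, l a (l b c) = l a (r b c))
  (A2 : forall a b c : V, r (l a b) c = r (r a b) c) (ss : forall a : V, s (s a) = a)
  (sl : forall a b : V, s (l a b) = r (s b) (s a))
  (sr : forall a b : V, s (r a b) = l (s b) (s a))
  (P1 : forall x y : V, dbrack l r (symz s x) y = 0)
  (P2 : forall x y : V, dbrack l r x (symz s y) = 0).

Lemma m1 : @bilinear_op K (V * V)%type (dbl_l l r s).
Proof. by split=> k [a b] [c d] [e f]; rewrite /dbl_l /= !pairZD; congr pair; simp Bl Br Ls; zc. Qed.
Lemma m2 : @bilinear_op K (V * V)%type (dbl_r l r s).
Proof. by split=> k [a b] [c d] [e f]; rewrite /dbl_r /= !pairZD; congr pair; simp Bl Br Ls; zc. Qed.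
Lemma m3 : @linear_map K (V * V)%type (dbl_s s).
Proof. move=> k [a b] [c d]; rewrite /dbl_s /= !pairZD; congr pair; simp Bl Br Ls; zc. Qed.
Lemma m4 : forall a b c : V * V, dbl_l l r s a (dbl_l l r s b c) = dbl_l l r s a (dbl_r l r s b c).
Proof. move=> [a b] [c d] [e f]; rewrite /dbl_l /dbl_r /=; congr pair; simp Bl Br Ls;
    rewrite ?sl ?sr ?ss ?A1 ?A2; reflexivity. Qed.
Lemma m5 : forall a b c : V * V, dbl_r l r s (dbl_l l r s a b) c = dbl_r l r s (dbl_r l r s a b) c.
Proof. move=> [a b] [c d] [e f]; rewrite /dbl_l /dbl_r /=; congr pair; simp Bl Br Ls;
    rewrite ?sl ?sr ?ss ?A1 ?A2; reflexivity. Qed.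
Lemma m6 : forall a : V * V, dbl_s s (dbl_s s a) = a.
Proof. move=> [a b]; rewrite /dbl_s /= ss opprK //. Qed.
Lemma m7 : forall a b : V * V, dbl_s s (dbl_l l r s a b) = dbl_r l r s (dbl_s s b) (dbl_s s a).
Proof. move=> [a b] [c d]; rewrite /dbl_s /dbl_l /dbl_r /=; congr pair; simp Bl Br Ls;
  rewrite ?sl ?sr ?ss ?opprD ?opprK; first [reflexivity | exact: addrC]. Qed.
Lemma m8 : forall a b : V * V, dbl_s s (dbl_r l r s a b) = dbl_l l r s (dbl_s s b) (dbl_s s a).
Proof. move=> [a b] [c d]; rewrite /dbl_s /dbl_l /dbl_r /=; congr pair; simp Bl Br Ls;
  rewrite ?sl ?sr ?ss ?opprD ?opprK; first [reflexivity | exact: addrC]. Qed.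
Lemma m9 : forall x y : V * V, dbrack (dbl_l l r s) (dbl_r l r s) (symz (dbl_s s) x) y = 0.
Proof. move=> [a b] [c d]; rewrite /dbrack /symz /dbl_s /dbl_l /dbl_r /= pairD subrr /=
    pair0; congr pair;
    rewrite ?(lin0 Ls, op0l Bl, op0r Bl, op0l Br, op0r Br, subr0, add0r, addr0, linD Ls, ss).
  + exact: P1.
  + by rewrite [s a + a]addrC subrr.
Qed.
Lemma m10 : forall x y : V * V, dbrack (dbl_l l r s) (dbl_r l r s) x (symz (dbl_s s) y) = 0.
Proof. move=> [c d] [a b]; rewrite /dbrack /symz /dbl_s /dbl_l /dbl_r /= subrr /=
    ?pairN ?pairD pair0; congr pair;
    rewrite ?(lin0 Ls, op0l Bl, op0r Bl, op0l Br, op0r Br, subr0, add0r, addr0, linD Ls, ss).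
  + exact: P2.
  + by rewrite [s a + a]addrC subrr.
Qed.
End Main.

Theorem lemma5p4 (K : fieldType) (V : lmodType K)
    (l r : V -> V -> V) (s : V -> V) :
  partially_symmetric l r s ->
  @partially_symmetric K (V * V)%type (dbl_l l r s) (dbl_r l r s) (dbl_s s).
Proof.
rewrite /partially_symmetric /zero_dialg_inv; case=> [[[Bl Br Ls] [[A1 A2 ss] [sl sr]]] P1 P2].
split; first split; first split.
- exact: m1.
- exact: m2.
- exact: m3.
- split; first split.
  + exact: m4.
  + exact: m5.
  + exact: m6.
  split.
  + exact: m7.
  + exact: m8.
- exact: m9.
- exact: m10.
Qed.
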